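(* Assume $\overline{P}^d\ge\overline{P}^d_e$ replaced by $\overline{P}^d_e$ and $\overline{P}^c$ by $\overline{P}^c_e$ is allowed (this does not change $\mathcal{P}^{0\text{-}1}$). For every $t\in\{1,\ldots,T\}$ and $\overline{\tau}\in\{0,\ldots,T-t\}$, every $(p^d,p^c,s,u)\in\mathcal{P}^{0\text{-}1}$ satisfies $$\sum_{\tau=0}^{\overline{\tau}}p^c_{t+\tau}+\sum_{\tau=0}^{\overline{\tau}}\rho^c(t,\tau,\overline{\tau})(1-u_{t+\tau})\le\sum_{\tau=0}^{\overline{\tau}}c(t,\tau)$$ and $$\sum_{\tau=0}^{\overline{\tau}}p^d_{t+\tau}+\sum_{\tau=0}^{\overline{\tau}}\rho^d(t,\tau,\overline{\tau})\,u_{t+\tau}\le\sum_{\tau=0}^{\overline{\tau}}d(t,\tau).$$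
   Context: Let $T\ge1$, $\Delta>0$, $\eta_c,\eta_d\in(0,1]$, $\overline{P}^d,\overline{P}^c>0$, $\underline{S}<\overline{S}$, $s_0\in[\underline{S},\overline{S}]$. $\mathcal{P}^{0\text{-}1}$ is the set of $(p^d,p^c,s)\in(\mathbb{R}^T_{\ge0})^3$, $u\in\{0,1\}^T$ with $p^d_t\le\overline{P}^d(1-u_t)$, $p^c_t\le\overline{P}^cu_t$, $\underline{S}\le s_t\le\overline{S}$, $s_t=s_{t-1}+\Delta(\eta_cp^c_t-p^d_t/\eta_d)$ for $t=1,\ldots,T$. Let $\overline{P}^d_e=\min\{\overline{P}^d,\eta_d(\overline{S}-\underline{S})/\Delta\}$, $\overline{P}^c_e=\min\{\overline{P}^c,(\overline{S}-\underline{S})/(\Delta\eta_c)\}$, $[x]^+=\max\{x,0\}$. Set $\underline{s}_0(0)=\overline{s}_0(0)=s_0$, $\underline{s}_0(t)=\max\{\underline{s}_0(t-1)-\Delta\overline{P}^d_e/\eta_d,\underline{S}\}$, $\overline{s}_0(t)=\min\{\overline{s}_0(t-1)+\Delta\eta_c\overline{P}^c_e,\overline{S}\}$ for $t=1,\ldots,T-1$. For $t=1..T$, $\overline{\tau}=0..T-t$: $c(t,\overline{\tau})=\min\{\overline{P}^c_e,[(\overline{S}-\underline{s}_0(t-1))/(\Delta\eta_c)-\overline{\tau}\overline{P}^c_e]^+\}$, $d(t,\overline{\tau})=\min\{\overline{P}^d_e,[(\overline{s}_0(t-1)-\underline{S})\eta_d/\Delta-\overline{\tau}\overline{P}^d_e]^+\}$.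 For $\tau=0..T-2$: $\overline{c}(\tau)=\min\{\overline{P}^c_e,[(\overline{S}-\underline{S})/(\Delta\eta_c)-\tau\overline{P}^c_e]^+\}$, $\overline{d}(\tau)=\min\{\overline{P}^d_e,[(\overline{S}-\underline{S})\eta_d/\Delta-\tau\overline{P}^d_e]^+\}$. $\overline{P}^c_e(t)=c(t,0)$, $\overline{P}^d_e(t)=d(t,0)$. For $\tau=0,\ldots,\overline{\tau}$: $\rho^c(t,\tau,\overline{\tau})=\max\{-\overline{P}^d_e(t+\tau)/(\eta_d\eta_c),\sum_{j=\tau}^{\overline{\tau}}c(t,j)-\sum_{j=0}^{\overline{\tau}-\tau-1}\overline{c}(j)\}$, $\rho^d(t,\tau,\overline{\tau})=\max\{-\eta_d\eta_c\overline{P}^c_e(t+\tau),\sum_{j=\tau}^{\overline{\tau}}d(t,j)-\sum_{j=0}^{\overline{\tau}-\tau-1}\overline{d}(j)\}$ (empty sums $=0$). *)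

(* Defs.v *)
From HB Require Import structures.
From mathcomp Require Import all_boot all_order all_algebra.
Set Implicit Arguments. Unset Strict Implicit. Unset Printing Implicit Defensive.
Import Order.TTheory GRing.Theory Num.Theory.
Local Open Scope ring_scope.

Definition pospart {R : realFieldType} (x : R) : R := Num.max x 0.

Definition Pde {R : realFieldType} (Delta etad Pd Smin Smax : R) : R :=
  Num.min Pd (etad * (Smax - Smin) / Delta).
Definition Pce {R : realFieldType} (Delta etac Pc Smin Smax : R) : R :=
  Num.min Pc ((Smax - Smin) / (Delta * etac)).

Fixpoint slow0 {R : realFieldType} (Delta etad Pd Smin Smax s0 : R) (t : nat) : R :=
  match t with
  | 0 => s0
  | t'.+1 => Num.max (slow0 Delta etad Pd Smin Smax s0 t'
                      - Delta * Pde Delta etad Pd Smin Smax / etad) Smin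
  end.
Fixpoint sup0 {R : realFieldType} (Delta etac Pc Smin Smax s0 : R) (t : nat) : R :=
  match t with
  | 0 => s0
  | t'.+1 => Num.min (sup0 Delta etac Pc Smin Smax s0 t'
                      + Delta * etac * Pce Delta etac Pc Smin Smax) Smax
  end.

Definition cc {R : realFieldType} (Delta etac etad Pc Pd Smin Smax s0 : R)
    (t taub : nat) : R :=
  Num.min (Pce Delta etac Pc Smin Smax)
    (pospart ((Smax - slow0 Delta etad Pd Smin Smax s0 t.-1) / (Delta * etac)
              - taub%:R * Pce Delta etac Pc Smin Smax)).
Definition dd {R : realFieldType} (Delta etac etad Pc Pd Smin Smax s0 : R)
    (t taub : nat) : R :=
  Num.min (Pde Delta etad Pd Smin Smax)
    (pospart ((sup0 Delta etac Pc Smin Smax s0 t.-1 - Smin) * etad / Delta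
              - taub%:R * Pde Delta etad Pd Smin Smax)).

Definition cbar {R : realFieldType} (Delta etac Pc Smin Smax : R) (tau : nat) : R :=
  Num.min (Pce Delta etac Pc Smin Smax)
    (pospart ((Smax - Smin) / (Delta * etac) - tau%:R * Pce Delta etac Pc Smin Smax)).
Definition dbar {R : realFieldType} (Delta etad Pd Smin Smax : R) (tau : nat) : R :=
  Num.min (Pde Delta etad Pd Smin Smax)
    (pospart ((Smax - Smin) * etad / Delta - tau%:R * Pde Delta etad Pd Smin Smax)).

(* rho^c(t,tau,taubar), rho^d(t,tau,taubar); used for tau <= taubar.
   \overline{P}^d_e(t') = d(t',0), \overline{P}^c_e(t') = c(t',0).
   sum_{j=0}^{taub-tau-1} is \sum_(0 <= j < taub - tau) (empty when tau = taub). *)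
Definition rhoc {R : realFieldType} (Delta etac etad Pc Pd Smin Smax s0 : R)
    (t tau taub : nat) : R :=
  Num.max (- dd Delta etac etad Pc Pd Smin Smax s0 (t + tau) 0 / (etad * etac))
    (\sum_(tau <= j < taub.+1) cc Delta etac etad Pc Pd Smin Smax s0 t j
     - \sum_(0 <= j < taub - tau) cbar Delta etac Pc Smin Smax j).
Definition rhod {R : realFieldType} (Delta etac etad Pc Pd Smin Smax s0 : R)
    (t tau taub : nat) : R :=
  Num.max (- (etad * etac) * cc Delta etac etad Pc Pd Smin Smax s0 (t + tau) 0)
    (\sum_(tau <= j < taub.+1) dd Delta etac etad Pc Pd Smin Smax s0 t j
     - \sum_(0 <= j < taub - tau) dbar Delta etad Pd Smin Smax j).

(* membership in P^{0-1}; sequences indexed by nat, only t = 1..T matter,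
   s 0 is the initial state s_0. u_t in {0,1} is a bool. *)
Definition inP01 {R : realFieldType} (T : nat) (Delta etac etad Pc Pd Smin Smax s0 : R)
    (pd pc s : nat -> R) (u : nat -> bool) : Prop :=
  s 0%N = s0 /\
  forall t : nat, (1 <= t <= T)%N ->
    0 <= pd t /\ 0 <= pc t /\ 0 <= s t /\
    pd t <= Pd * (1 - (u t)%:R) /\ pc t <= Pc * (u t)%:R /\
    Smin <= s t <= Smax /\
    s t = s t.-1 + Delta * (etac * pc t - pd t / etad).

(* Main.v *)
Require Import Defs.
From HB Require Import structures.
From mathcomp Require Import all_boot all_order all_algebra.
From mathcomp Require Import ring lra zify.
Import Order.TTheory GRing.Theory Num.Theory.
Local Open Scope ring_scope.


Lemma clamp_step {R : realFieldType} (x P A : R) : 0 <= P ->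
  Num.min x A + Num.min P (Num.max (A - x) 0) = Num.min (x+P) A.
Proof.
move=> hP. case: (leP x A) => h1; case: (leP (A-x) 0) => h2; case: (leP P (A-x)) => h3;
 case: (leP P 0) => h4; case: (leP (x+P) A) => h5; lra.
Qed.

Lemma sum_clamp {R : realFieldType} (P A : R) (n : nat) : 0 <= P -> 0 <= A ->
  \sum_(0 <= j < n) Num.min P (Num.max (A - j%:R * P) 0) = Num.min (n%:R * P) A.
Proof.
move=> hP hA; elim: n => [|n IH].
  rewrite big_geq // mul0r. case: (leP 0 A) => h; lra.
rewrite big_nat_recr //= IH clamp_step // -natr1 mulrDl mul1r //.
Qed.

Lemma mono_clamp {R : realFieldType} (x y d A E : R) : 0 <= d -> y <= x -> A <= E ->
  Num.min (x + d) A - Num.min x A <= Num.min (y + d) E - Num.min y E.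
Proof.
move=> hd hxy hAE. case: (leP x A) => h1; case: (leP (x+d) A) => h2;
 case: (leP y E) => h3; case: (leP (y+d) E) => h4; lra.
Qed.

Lemma key {R : realFieldType} (P A E : R) (c cb g : nat -> R) (ub : nat -> bool) (N : nat) :
  0 <= P -> 0 <= A -> A <= E ->
  (forall j, c j = Num.min P (Num.max (A - j%:R * P) 0)) ->
  (forall j, cb j = Num.min P (Num.max (E - j%:R * P) 0)) ->
  (forall tau, (tau < N)%N -> g tau <= P) ->
  (forall b, (b <= N)%N -> \sum_(0 <= tau < b) g tau <= A) ->
  (forall a b, (a <= b <= N)%N -> \sum_(a <= tau < b) g tau <= E) ->
  \sum_(0 <= tau < N) (if ub tau then g tau else
     Num.max (g tau) (\sum_(tau <= j < N.-1.+1) c j - \sum_(0 <= j < N.-1 - tau) cb j))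
  <= \sum_(0 <= j < N) c j.
Proof.
move=> hP hA hAE hc hcb.
move=> hgP hgA hgE.
have hE : 0 <= E by lra.
have Cf : forall n, \sum_(0 <= j < n) c j = Num.min (n%:R * P) A.
  move=> n; rewrite -(sum_clamp P A n hP hA); apply: eq_bigr => j _; exact: hc.
have Cbf : forall n, \sum_(0 <= j < n) cb j = Num.min (n%:R * P) E.
  move=> n; rewrite -(sum_clamp P E n hP hE); apply: eq_bigr => j _; exact: hcb.
pose beta n tau := \sum_(tau <= j < n) c j - \sum_(0 <= j < n.-1 - tau) cb j.
pose f n tau := if ub tau then g tau else Num.max (g tau) (beta n tau).
have betaE : forall n tau, (tau <= n)%N ->
   beta n tau = Num.min (n%:R * P) A - Num.min (tau%:R * P) A - Num.min ((n.-1 - tau)%:R * P) E.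
  move=> n tau htn; rewrite /beta -Cbf -!Cf (big_cat_nat (leq0n tau) htn) /=; ring.
have sumgP : forall a b, (a <= b <= N)%N -> \sum_(a <= tau < b) g tau <= (b - a)%:R * P.
  move=> a b /andP[hab hbN].
  apply: le_trans (_ : \sum_(a <= tau < b) P <= _).
    apply: ler_sum_nat => i /andP[_ hi]; apply: hgP; exact: leq_trans hi hbN.
  by rewrite sumr_const_nat mulr_natl.
have L : forall k n, (k <= n <= N)%N ->
   \sum_(0 <= tau < k) f n tau + \sum_(k <= tau < n) g tau <= Num.min (n%:R * P) A.
  elim=> [|k IH] n /andP[hkn hnN].
    rewrite big_geq // add0r le_min; apply/andP; split.
      by have := sumgP 0%N n; rewrite hnN subn0 => /(_ isT).
    by apply: hgA.
  rewrite big_nat_recr //=.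
  have hkn' : (k <= n)%N by apply: ltnW.
  have IHn := IH n (introT andP (conj hkn' hnN)).
  rewrite (@big_cat_nat _ _ _ k.+1 k n) //= big_nat1 in IHn.
  have [fk|[fk hbg]] : f n k = g k \/ (f n k = beta n k /\ g k < beta n k).
    rewrite /f; case: (ub k); first by left.
    by case: (leP (beta n k) (g k)) => h; [left|right].
    rewrite fk; lra.
  have hkN : (k <= N)%N by apply: (leq_trans hkn' hnN).
  have IHk := IH k (introT andP (conj (leqnn k) hkN)).
  rewrite [\sum_(k <= _ < k) _]big_geq // addr0 in IHk.
  have mono : \sum_(0 <= tau < k) f n tau <= \sum_(0 <= tau < k) f k tau.
    apply: ler_sum_nat => i /andP[_ hik]; rewrite /f; case: (ub i) => //.
    have hbb : beta n i <= beta k i.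
      rewrite !betaE; try by apply: ltnW; try apply: (leq_trans hik).
      have e1 : n%:R * P = k%:R * P + (n - k)%:R * P by rewrite -mulrDl -natrD subnKC.
      have e2 : (n.-1 - i)%:R * P = (k.-1 - i)%:R * P + (n - k)%:R * P.
        rewrite -mulrDl -natrD; congr (_%:R * _); rewrite -subn1 -[k.-1]subn1. lia.
      rewrite e1 e2.
      have hd : 0 <= (n - k)%:R * P by apply: mulr_ge0.
      have hyx : (k.-1 - i)%:R * P <= k%:R * P.
        apply: ler_wpM2r => //; rewrite ler_nat; lia.
      have := mono_clamp _ _ _ _ _ hd hyx hAE; lra.
    case: (leP (beta n i) (g i)) => h1; case: (leP (beta k i) (g i)) => h2; lra.
  have suf : \sum_(k.+1 <= tau < n) g tau <= Num.min ((n.-1 - k)%:R * P) E.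
    rewrite le_min; apply/andP; split.
      have := sumgP k.+1 n; rewrite hkn hnN => /(_ isT).
      by have -> : (n - k.+1 = n.-1 - k)%N by lia.
    apply: hgE; by rewrite hkn.
  rewrite fk; rewrite (betaE n k hkn') in hbg *.
  lra.
have := L N N; rewrite leqnn => /(_ isT).
rewrite [\sum_(N <= _ < N) _]big_geq // addr0 -Cf.
destruct N as [|N']; first by rewrite !big_geq.
by [].
Qed.

Lemma ldiv {R : realFieldType} (x z y : R) : 0 < y -> x <= z -> x / y <= z / y.
Proof. by move=> hy hxz; rewrite ler_pM2r ?invr_gt0. Qed.

Theorem mainTheorem6 (R : realFieldType) (T : nat)
    (Delta etac etad Pd Pc Smin Smax s0 : R)
    (hT : (1 <= T)%N) (hDelta : 0 < Delta)
    (hetac : 0 < etac <= 1) (hetad : 0 < etad <= 1)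
    (hPd : 0 < Pd) (hPc : 0 < Pc) (hS : Smin < Smax) (hs0 : Smin <= s0 <= Smax)
    (t taub : nat) (ht : (1 <= t <= T)%N) (htaub : (taub <= T - t)%N)
    (pd pc s : nat -> R) (u : nat -> bool)
    (hP : inP01 T Delta etac etad Pc Pd Smin Smax s0 pd pc s u) :
  \sum_(0 <= tau < taub.+1) pc (t + tau)%N
    + \sum_(0 <= tau < taub.+1)
        rhoc Delta etac etad Pc Pd Smin Smax s0 t tau taub * (1 - (u (t + tau)%N)%:R)
  <= \sum_(0 <= tau < taub.+1) cc Delta etac etad Pc Pd Smin Smax s0 t tau
  /\
  \sum_(0 <= tau < taub.+1) pd (t + tau)%N
    + \sum_(0 <= tau < taub.+1)
        rhod Delta etac etad Pc Pd Smin Smax s0 t tau taub * (u (t + tau)%N)%:R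
  <= \sum_(0 <= tau < taub.+1) dd Delta etac etad Pc Pd Smin Smax s0 t tau.
Proof.
case: hP => hs0e hcon.
case/andP: hetac => hc0 hc1; case/andP: hetad => hd0 hd1.
case/andP: hs0 => hs0l hs0u.
destruct t as [|t0]; first by [].
case/andP: ht => _ htT.
set PE := Pde Delta etad Pd Smin Smax.
set PC := Pce Delta etac Pc Smin Smax.
have hDc : 0 < Delta * etac by apply: mulr_gt0.
have hdn : etad != 0 by apply: lt0r_neq0.
have hcn : etac != 0 by apply: lt0r_neq0.
have hDn : Delta != 0 by apply: lt0r_neq0.
have hEc : 0 < (Smax - Smin) / (Delta * etac) by apply: divr_gt0 => //; lra.
have hEd : 0 < etad * (Smax - Smin) / Delta by apply: divr_gt0 => //; apply: mulr_gt0 => //; lra.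
have hPE : 0 <= PE by rewrite /PE /Pde le_min; apply/andP; split; lra.
have hPC : 0 <= PC by rewrite /PC /Pce le_min; apply/andP; split; lra.
have sb : forall k, (k <= T)%N -> Smin <= s k <= Smax.
  case=> [|k] hk; first by rewrite hs0e; apply/andP.
  have [_ [_ [_ [_ [_ [h _]]]]]] := hcon k.+1 hk; exact: h.
have step : forall k, (1 <= k <= T)%N ->
   0 <= pd k /\ 0 <= pc k /\ pd k <= Pd * (1 - (u k)%:R) /\ pc k <= Pc * (u k)%:R /\
       (Smin <= s k.-1 <= Smax) /\ (Smin <= s k <= Smax) /\
       s k = s k.-1 + Delta * (etac * pc k - pd k / etad).
  move=> k hk; have [h1 [h2 [_ [h4 [h5 [h6 h7]]]]]] := hcon k hk.
  do 4 (split => //); split; last by []; apply: sb; case/andP: hk => _ hk; apply: leq_trans hk; exact: leq_pred.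
have fact : forall k, (1 <= k <= T)%N ->
   [/\ pd k <= PE, pc k <= PC,
       (u k = false -> pc k = 0 /\ Delta * pd k = etad * (s k.-1 - s k)) &
       (u k = true -> pd k = 0 /\ Delta * etac * pc k = s k - s k.-1)].
  move=> k hk; have [h1 [h2 [h3 [h4 [/andP[h5 h5'] [/andP[h6 h6'] h7]]]]]] := step k hk.
  have F : u k = false -> pc k = 0 /\ Delta * pd k = etad * (s k.-1 - s k).
    move=> hu; rewrite hu /= in h3 h4.
    have e : pc k = 0 by lra.
    split => //; rewrite h7 e; field; exact: hdn.
  have G : u k = true -> pd k = 0 /\ Delta * etac * pc k = s k - s k.-1.
    move=> hu; rewrite hu /= in h3 h4.
    have e : pd k = 0 by lra.
    split => //; rewrite h7 e; field; exact: hdn.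
  split => //.
  - case hu: (u k); first by case: (G hu) => -> _.
    case: (F hu) => _ e.
    rewrite /PE /Pde le_min; apply/andP; split; first by rewrite hu /= in h3; lra.
    rewrite ler_pdivlMr //; nra.
  - case hu: (u k); last by case: (F hu) => -> _.
    case: (G hu) => _ e.
    rewrite /PC /Pce le_min; apply/andP; split; first by rewrite hu /= in h4; lra.
    rewrite ler_pdivlMr //; nra.
have slow : forall k, (k <= T)%N ->
    Smin <= slow0 Delta etad Pd Smin Smax s0 k <= s k.
  elim=> [|k IH] hk; first by rewrite hs0e /=; apply/andP.
  have hk1 : (1 <= k.+1 <= T)%N by rewrite hk.
  have [h1 [h2 [_ [_ [_ [/andP[h6 h6'] h7]]]]]] := step _ hk1.
  have [hpe _ _ _] := fact _ hk1.
  have /andP[_ IH'] := IH (ltnW hk).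
  rewrite /= le_max lexx orbT /= ge_max h6 andbT.
  have q : pd k.+1 / etad <= PE / etad by apply: ldiv.
  have q2 : 0 <= etac * pc k.+1 by apply: mulr_ge0 => //; lra.
  rewrite h7 /= -/PE -mulrA; nra.
have sup : forall k, (k <= T)%N ->
    s k <= sup0 Delta etac Pc Smin Smax s0 k <= Smax.
  elim=> [|k IH] hk; first by rewrite hs0e /=; apply/andP.
  have hk1 : (1 <= k.+1 <= T)%N by rewrite hk.
  have [h1 [h2 [_ [_ [_ [/andP[h6 h6'] h7]]]]]] := step _ hk1.
  have [_ hpc _ _] := fact _ hk1.
  have /andP[IH' _] := IH (ltnW hk).
  rewrite /= ge_min lexx orbT andbT le_min h6' andbT.
  have q : 0 <= pd k.+1 / etad by apply: divr_ge0 => //; lra.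
  rewrite h7 /= -/PC; nra.
have hN : forall tau, (tau < taub.+1)%N -> (1 <= (t0 + tau).+1 <= T)%N.
  move=> tau htau; apply/andP; split => //; move: htau htaub htT; clear; lia.
have hNs : forall b, (b <= taub.+1)%N -> (t0 + b <= T)%N.
  move=> b hb; move: hb htaub htT; clear; lia.
split.
-
  set A := (Smax - slow0 Delta etad Pd Smin Smax s0 t0) / (Delta * etac).
  set E := (Smax - Smin) / (Delta * etac).
  pose gc := fun tau => if u (t0.+1 + tau)%N then pc (t0.+1 + tau)%N
     else - dd Delta etac etad Pc Pd Smin Smax s0 (t0.+1 + tau)%N 0 / (etad * etac).
  have gcle : forall tau, (tau < taub.+1)%N -> gc tau <= PC /\ gc tau <= (s (t0 + tau.+1)%N - s (t0 + tau)%N) / (Delta * etac).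
    move=> tau htau; have hk := hN _ htau.
    have [hpe hpc F G] := fact _ hk.
    have [h1 [h2 [_ [_ [/andP[h5 h5'] [/andP[h6 h6'] h7]]]]]] := step _ hk.
    have /andP[hsup _] := sup (t0 + tau)%N (hNs _ (ltnW htau)).
    rewrite /= in h5 h5' hsup.
    rewrite /gc addSn addnS.
    case hu: (u _).
      case: (G hu) => e1 e2; split => //.
      rewrite ler_pdivlMr //= -e2; lra.
    case: (F hu) => e1 e2.
    have ddge : pd (t0 + tau).+1 <= dd Delta etac etad Pc Pd Smin Smax s0 (t0 + tau).+1 0.
      rewrite /dd -/PE mul0r subr0 le_min hpe /= /pospart le_max; apply/orP; left.
      rewrite /= ler_pdivlMr // mulrC e2 [_ * etad]mulrC; apply: ler_wpM2l; lra.
    have dd0 : 0 <= dd Delta etac etad Pc Pd Smin Smax s0 (t0 + tau).+1 0.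
      by rewrite /dd le_min hPE /pospart le_max lexx orbT.
    have hdc : 0 < etad * etac by apply: mulr_gt0.
    split.
      have : 0 <= dd Delta etac etad Pc Pd Smin Smax s0 (t0 + tau).+1 0 / (etad * etac).
        by apply: divr_ge0 => //; apply: ltW.
      lra.
    have -> : s (t0 + tau).+1 - s (t0 + tau)%N = - (Delta * pd (t0 + tau).+1) / etad.
      by rewrite e2 /=; field.
    have -> : - (Delta * pd (t0 + tau).+1) / etad / (Delta * etac) = - pd (t0 + tau).+1 / (etad * etac).
      by field; rewrite hdn hcn hDn.
    apply: ldiv => //; lra.
  have sumg : forall a b, (a <= b <= taub.+1)%N -> \sum_(a <= tau < b) gc tau
      <= (s (t0 + b)%N - s (t0 + a)%N) / (Delta * etac).
    move=> a b /andP[hab hb].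
    apply: le_trans (_ : \sum_(a <= tau < b) (s (t0 + tau.+1)%N - s (t0 + tau)%N) / (Delta * etac) <= _).
      apply: ler_sum_nat => i /andP[_ hi]; have [] := gcle i (leq_trans hi hb); done.
    by rewrite -mulr_suml (telescope_sumr (fun k => s (t0 + k)%N) hab).
  have /andP[hsl1 hsl2] := slow t0 (ltnW htT).
  have /andP[hsb1 hsb2] := sb t0 (ltnW htT).
  have hA : 0 <= A by apply: divr_ge0; lra.
  have hAE : A <= E by apply: ldiv => //; lra.
  have hgP : forall tau, (tau < taub.+1)%N -> gc tau <= PC.
    by move=> tau htau; case: (gcle tau htau).
  have hgA : forall b, (b <= taub.+1)%N -> \sum_(0 <= tau < b) gc tau <= A.
    move=> b hb; apply: le_trans (sumg 0%N b hb) _; rewrite addn0.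
    have /andP[_ h] := sb _ (hNs _ hb); apply: ldiv => //; lra.
  have hgE : forall a b, (a <= b <= taub.+1)%N -> \sum_(a <= tau < b) gc tau <= E.
    move=> a b hab; apply: le_trans (sumg a b hab) _.
    case/andP: hab => hab hb.
    have /andP[_ h] := sb _ (hNs _ hb).
    have /andP[h' _] := sb _ (hNs _ (leq_trans hab hb)).
    apply: ldiv => //; lra.
  have K := @key R PC A E (fun j => cc Delta etac etad Pc Pd Smin Smax s0 t0.+1 j)
    (fun j => cbar Delta etac Pc Smin Smax j) gc (fun tau => u (t0.+1 + tau)%N) taub.+1
    hPC hA hAE (fun j => erefl) (fun j => erefl) hgP hgA hgE.
  rewrite -big_split /=; apply: (le_trans _ K).
  rewrite le_eqVlt; apply/orP; left; apply/eqP; apply: eq_big_nat => i hi.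
  rewrite /gc; case hu: (u _) => /=.
    by rewrite subrr mulr0 addr0.
  have [_ _ F _] := fact _ (hN _ (proj2 (andP hi))).
  rewrite addSn in hu; case: (F hu) => e1 _.
  by rewrite addSn e1 subr0 mulr1 add0r.
-
  set A := (sup0 Delta etac Pc Smin Smax s0 t0 - Smin) * etad / Delta.
  set E := (Smax - Smin) * etad / Delta.
  pose gd := fun tau => if ~~ u (t0.+1 + tau)%N then pd (t0.+1 + tau)%N
     else - (etad * etac) * cc Delta etac etad Pc Pd Smin Smax s0 (t0.+1 + tau)%N 0.
  have gdle : forall tau, (tau < taub.+1)%N -> gd tau <= PE /\
      gd tau <= (- s (t0 + tau.+1)%N - - s (t0 + tau)%N) * (etad / Delta).
    move=> tau htau; have hk := hN _ htau.
    have [hpe hpc F G] := fact _ hk.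
    have [h1 [h2 [_ [_ [/andP[h5 h5'] [/andP[h6 h6'] h7]]]]]] := step _ hk.
    have /andP[_ hsl] := slow (t0 + tau)%N (hNs _ (ltnW htau)).
    rewrite /= in h5 h5' hsl h7.
    rewrite /gd addSn addnS.
    case hu: (u _) => /=; last first.
      case: (F hu) => e1 e2; split => //.
      rewrite h7 e1 le_eqVlt; apply/orP; left; apply/eqP; field; by rewrite ?hdn ?hDn ?hcn.
    case: (G hu) => e1 e2.
    have ccge : pc (t0 + tau).+1 <= cc Delta etac etad Pc Pd Smin Smax s0 (t0 + tau).+1 0.
      rewrite /cc -/PC mul0r subr0 le_min hpc /= /pospart le_max; apply/orP; left.
      rewrite /= ler_pdivlMr // mulrC e2; lra.
    have cc0 : 0 <= cc Delta etac etad Pc Pd Smin Smax s0 (t0 + tau).+1 0.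
      by rewrite /cc le_min hPC /pospart le_max lexx orbT.
    have hdc : 0 < etad * etac by apply: mulr_gt0.
    have m1 : 0 <= etad * etac * cc Delta etac etad Pc Pd Smin Smax s0 (t0 + tau).+1 0.
      by apply: mulr_ge0 => //; apply: ltW.
    have m2 := ler_wpM2l (ltW hdc) ccge.
    split; first lra.
    have -> : (- s (t0 + tau).+1 - - s (t0 + tau)%N) * (etad / Delta)
        = - (etad * etac) * pc (t0 + tau).+1.
      by rewrite h7 e1; field; rewrite ?hdn ?hDn ?hcn.
    lra.
  have sumg : forall a b, (a <= b <= taub.+1)%N -> \sum_(a <= tau < b) gd tau
      <= (- s (t0 + b)%N - - s (t0 + a)%N) * (etad / Delta).
    move=> a b /andP[hab hb].
    apply: le_trans (_ : \sum_(a <= tau < b) (- s (t0 + tau.+1)%N - - s (t0 + tau)%N) * (etad / Delta) <= _).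
      apply: ler_sum_nat => i /andP[_ hi]; have [] := gdle i (leq_trans hi hb); done.
    by rewrite -mulr_suml (telescope_sumr (fun k => - s (t0 + k)%N) hab).
  have /andP[hsu1 hsu2] := sup t0 (ltnW htT).
  have /andP[hsb1 hsb2] := sb t0 (ltnW htT).
  have hA : 0 <= A by apply: divr_ge0; [apply: mulr_ge0; lra | lra].
  have hAE : A <= E by apply: ldiv => //; apply: ler_wpM2r; lra.
  have hgP : forall tau, (tau < taub.+1)%N -> gd tau <= PE.
    by move=> tau htau; case: (gdle tau htau).
  have hgA : forall b, (b <= taub.+1)%N -> \sum_(0 <= tau < b) gd tau <= A.
    move=> b hb; apply: le_trans (sumg 0%N b hb) _; rewrite addn0.
    have /andP[h _] := sb _ (hNs _ hb); rewrite mulrA; apply: ldiv => //;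
      apply: ler_wpM2r; lra.
  have hgE : forall a b, (a <= b <= taub.+1)%N -> \sum_(a <= tau < b) gd tau <= E.
    move=> a b hab; apply: le_trans (sumg a b hab) _.
    case/andP: hab => hab hb.
    have /andP[h _] := sb _ (hNs _ hb).
    have /andP[_ h'] := sb _ (hNs _ (leq_trans hab hb)).
    rewrite mulrA; apply: ldiv => //; apply: ler_wpM2r; lra.
  have K := @key R PE A E (fun j => dd Delta etac etad Pc Pd Smin Smax s0 t0.+1 j)
    (fun j => dbar Delta etad Pd Smin Smax j) gd (fun tau => ~~ u (t0.+1 + tau)%N) taub.+1
    hPE hA hAE (fun j => erefl) (fun j => erefl) hgP hgA hgE.
  rewrite -big_split /=; apply: (le_trans _ K).
  rewrite le_eqVlt; apply/orP; left; apply/eqP; apply: eq_big_nat => i hi.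
  rewrite /gd; case hu: (u _) => /=; last by rewrite mulr0 addr0.
  have [_ _ _ G] := fact _ (hN _ (proj2 (andP hi))).
  rewrite addSn in hu; case: (G hu) => e1 _.
  by rewrite addSn e1 mulr1 add0r.
Qed.
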